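(* Let $u$ be a parking sorted configuration on $K_{m,n}$, and for $s\in\mathbb Z$ let $u[s]$ be the configuration equal to $u$ outside the sink and equal to $s$ at $a_m$ (each $u[s]$ is again parking sorted). Let $F_u(x,y)=\sum_{s\in\mathbb Z}x^{\mathrm{xpara}(u[s])}y^{\mathrm{ypara}(u[s])}$. Let $S_u^+=\{s\in\mathbb Z: s\text{ is left and } s+1\text{ is right}\}$ and $S_u^-=\{s\in\mathbb Z: s\text{ is right and } s+1\text{ is left}\}$ (these are finite, with $|S_u^+|=|S_u^-|+1$). Then $$F_u(x,y)=\frac{1-xy}{(1-x)(1-y)}\Big(\sum_{s\in S_u^+}x^{\mathrm{xpara}(u[s])}y^{\mathrm{ypara}(u[s])}-\sum_{s\in S_u^-}x^{\mathrm{xpara}(u[s])}y^{\mathrm{ypara}(u[s])}\Big).$$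
   Context: Let $m,n\ge 1$. $K_{m,n}$ is the complete bipartite graph with vertex set $V=A_m\sqcup B_n$, $A_m=\{a_1,\dots,a_m\}$, $B_n=\{b_1,\dots,b_n\}$, with exactly one edge $\{a_i,b_j\}$ for every $i,j$; $a_m$ is the sink. A configuration is a function $u:V\to\mathbb Z$. For $c\in V$ with graph degree $d_c$, $\Delta^{(c)}=d_c e_c-\sum_{c'\text{ adjacent to }c}e_{c'}$ ($e_c$ the indicator of $c$), $\Delta^{(C)}=\sum_{c\in C}\Delta^{(c)}$. $u$ is parking if $u_c\ge0$ for $c\ne a_m$ and for every non-empty $C\subseteq V\setminus\{a_m\}$, $u-\Delta^{(C)}$ has a negative value at a vertex other than $a_m$; sorted if $u_{a_1}\le\dots\le u_{a_{m-1}}$ and $u_{b_1}\le\dots\le u_{b_n}$. The $r$-vector of a parking sorted $u$ is $(r_1,\dots,r_n)$, $r_i=u_{b_i}+1-\#\{j\in\{1,\dots,m-1\}: u_{a_j}+1\le i-1\}$; it depends only on the values outside the sink. For $\sigma\in\mathbb Z$ write $\sigma=qn+t$ with $0\le t<n$; $\sigma$ is called right if $q+r_{t+1}\ge1$ and left otherwise. $\mathrm{xpara}(u)=\#\{\sigma>u_{a_m}:\sigma\text{ left}\}$ and $\mathrm{ypara}(u)=\#\{\sigma\le u_{a_m}:\sigma\text{ right}\}$ (equivalently $\mathrm{xpara}(u)=(m-1)(n-1)+\mathrm{rank}(u)-\mathrm{degree}(u)$, $\mathrm{ypara}(u)=\mathrm{rank}(u)+1$). The identity is one of formal power series in $x,y$.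 *)

(* Defs.v *)
From HB Require Import structures.
From mathcomp Require Import all_boot all_order all_algebra.
From Stdlib Require Import ClassicalEpsilon.
Set Implicit Arguments. Unset Strict Implicit. Unset Printing Implicit Defensive.
Import Order.TTheory GRing.Theory Num.Theory.
Local Open Scope ring_scope.

Definition zwindow (N : nat) : seq int :=
  [seq (k%:Z - N%:Z) | k <- iota 0 (N.*2).+1].

Definition ifinite (P : pred int) : Prop :=
  exists N : nat, forall z, P z -> (absz z <= N)%N.

(* cardinality of a finite set P of integers (junk value 0 if P is infinite);
   independent of the chosen bound N *)
Definition icard (P : pred int) : nat :=
  match excluded_middle_informative (ifinite P) with
  | left H => count P (zwindow (proj1_sig (constructive_indefinite_description _ H)))
  | right _ => 0%N
  end.

(* vertices: inl i = a_{i+1} (i < m), inr j = b_{j+1} (j < n) *)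
Definition V (m n : nat) : finType := ('I_m + 'I_n)%type.

(* the sink is a_m, i.e. inl with index m-1 *)
Definition is_sink m n (v : V m n) : bool :=
  match v with inl i => val i == m.-1 | inr _ => false end.

Definition adj m n (v w : V m n) : bool :=
  match v, w with
  | inl _, inr _ => true
  | inr _, inl _ => true
  | _, _ => false
  end.

Definition deg m n (c : V m n) : nat := #|[set w | adj c w]|.

Definition config m n := V m n -> int.

Definition Delta1 m n (c : V m n) : config m n :=
  fun v => (if v == c then (deg c)%:Z else 0) - (if adj c v then 1 else 0).

Definition DeltaS m n (C : {set V m n}) : config m n :=
  fun v => \sum_(c in C) Delta1 c v.

Definition parking m n (u : config m n) : Prop :=
  (forall c : V m n, ~~ is_sink c -> 0 <= u c) /\
  (forall C : {set V m n}, C != set0 -> (forall c, c \in C -> ~~ is_sink c) ->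
     exists v : V m n, ~~ is_sink v /\ u v - DeltaS C v < 0).

Definition sorted_config m n (u : config m n) : Prop :=
  (forall i j : 'I_m, (i <= j)%N -> (j < m.-1)%N -> u (inl i) <= u (inl j)) /\
  (forall i j : 'I_n, (i <= j)%N -> u (inr i) <= u (inr j)).

(* r_{k+1} = u_{b_{k+1}} + 1 - #{ j in 1..m-1 : u_{a_j} + 1 <= k }  (k = 0..n-1) *)
Definition rvec m n (u : config m n) (k : 'I_n) : int :=
  u (inr k) + 1 - (#|[set j : 'I_m | (val j < m.-1)%N && (u (inl j) + 1 <= (val k)%:Z)]|)%:Z.

Definition rvec_nat m n (u : config m n) (k : nat) : int :=
  oapp (fun o : 'I_n => rvec u o) 0 (insub k).

Definition right_pt m n (u : config m n) (sigma : int) : bool :=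
  1 <= (sigma %/ n%:Z)%Z + rvec_nat u (absz (sigma %% n%:Z)%Z).

Definition left_pt m n (u : config m n) (sigma : int) : bool := ~~ right_pt u sigma.

Definition sinkval m n (u : config m n) : int :=
  oapp (fun i : 'I_m => u (inl i)) 0 (insub m.-1).

Definition xpara m n (u : config m n) : nat :=
  icard (fun sigma => (sinkval u < sigma) && left_pt u sigma).

Definition ypara m n (u : config m n) : nat :=
  icard (fun sigma => (sigma <= sinkval u) && right_pt u sigma).

Definition upd m n (u : config m n) (s : int) : config m n :=
  fun v => if is_sink v then s else u v.

Definition Splus m n (u : config m n) : pred int :=
  fun s => left_pt u s && right_pt u (s + 1).
Definition Sminus m n (u : config m n) : pred int :=
  fun s => right_pt u s && left_pt u (s + 1).

(* a series is its coefficient function: (i, j) |-> [x^i y^j] *)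
Definition series := nat -> nat -> int.

Definition smul (f g : series) : series :=
  fun i j => \sum_(a < i.+1) \sum_(b < j.+1) f a b * g (i - a)%N (j - b)%N.

Definition one_minus_xy : series :=
  fun i j => ((i == 0%N) && (j == 0%N))%:R - ((i == 1%N) && (j == 1%N))%:R.

(* 1 / ((1 - x)(1 - y)) = sum_{a,b} x^a y^b *)
Definition inv_1mx_1my : series := fun _ _ => 1.

Definition one_minus_x_one_minus_y : series :=
  fun i j => ((i <= 1)%N && (j <= 1)%N)%:R * (-1) ^+ (i + j).

Definition mono_coef m n (u : config m n) (P : pred int) (i j : nat) : pred int :=
  fun s => P s && (xpara (upd u s) == i) && (ypara (upd u s) == j).

Definition Fu m n (u : config m n) : series :=
  fun i j => (icard (mono_coef u predT i j))%:Z.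

Definition Gu m n (u : config m n) : series :=
  fun i j => (icard (mono_coef u (Splus u) i j))%:Z - (icard (mono_coef u (Sminus u) i j))%:Z.

(* Main.v *)
Require Import Defs.
From HB Require Import structures.
From mathcomp Require Import all_boot all_order all_algebra zify ring.
From Stdlib Require Import FunctionalExtensionality ClassicalEpsilon.
Import Order.TTheory GRing.Theory Num.Theory.
Local Open Scope ring_scope.

Lemma zwindow_mem N z : (z \in zwindow N) = (absz z <= N)%N.
Proof.
apply/mapP/idP.
  by move=> [k]; rewrite mem_iota => /andP[_ hk] ->; lia.
move=> hz; exists (absz (z + N%:Z)).
  rewrite mem_iota /=; lia.
lia.
Qed.

Lemma zwindow_uniq N : uniq (zwindow N).
Proof.
rewrite map_inj_uniq ?iota_uniq // => a b /= h; lia.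
Qed.

Lemma count_indep (P : pred int) s1 s2 : uniq s1 -> uniq s2 ->
  (forall z, P z -> z \in s1) -> (forall z, P z -> z \in s2) ->
  count P s1 = count P s2.
Proof.
move=> u1 u2 h1 h2; rewrite -!size_filter; apply: perm_size.
apply: uniq_perm; rewrite ?filter_uniq // => z; rewrite !mem_filter.
by case Pz: (P z) => //=; rewrite h1 ?h2.
Qed.

Lemma icardE (P : pred int) N : (forall z, P z -> (absz z <= N)%N) ->
  icard P = count P (zwindow N).
Proof.
move=> hN; rewrite /icard; case: excluded_middle_informative => [H|H]; last first.
  by exfalso; apply: H; exists N.
case: constructive_indefinite_description => N0 h0; rewrite [proj1_sig _]/=.
apply: count_indep; rewrite ?zwindow_uniq // => z Pz; rewrite zwindow_mem.
  exact: h0. exact: hN.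
Qed.

Lemma icard_ext (P Q : pred int) : (forall z, P z = Q z) -> icard P = icard Q.
Proof. by move=> h; have -> : P = Q by apply: functional_extensionality. Qed.

Lemma count_split (p q r : pred int) s : (forall x, p x = q x || r x) ->
  (forall x, ~~ (q x && r x)) -> count p s = (count q s + count r s)%N.
Proof.
move=> h d; elim: s => //= x s ->; rewrite h; move: (d x).
by case: (q x); case: (r x) => //= _; lia.
Qed.

Lemma count_single (c : pred int) a s : uniq s -> a \in s ->
  count (fun x => (x == a) && c x) s = c a.
Proof.
move=> us ais.
rewrite (eq_count (a2 := fun x => (x == a) && c a)); last first.
  by move=> x /=; case: eqP => // ->.
case: (c a).
  rewrite (eq_count (a2 := pred1 a)); last by move=> x /=; rewrite andbT.
  by rewrite count_uniq_mem ?ais.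
by rewrite (eq_count (a2 := pred0)) ?count_pred0 // => x; rewrite andbF.
Qed.

Lemma icard_single (P : pred int) a : (forall z, P z -> z = a) -> icard P = P a.
Proof.
move=> h; rewrite (@icardE _ (absz a)); last by move=> z /h ->.
rewrite (eq_count (a2 := fun x => (x == a) && P x)); last first.
  by move=> x /=; case Px: (P x); rewrite ?andbF // (h _ Px) eqxx.
by rewrite count_single ?zwindow_uniq ?zwindow_mem.
Qed.

Lemma count_sum (P : pred int) s : (count P s)%:R = \sum_(x <- s) (P x)%:R :> int.
Proof. by elim: s => [|x s IH]; rewrite ?big_nil ?big_cons //= natrD IH. Qed.

Lemma sum_zwindow (F : int -> int) N :
  \sum_(s <- zwindow N) F s = \sum_(0 <= k < (N.*2).+1) F (k%:Z - N%:Z).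
Proof. by rewrite big_map /index_iota subn0. Qed.

Definition goodR (R : int -> bool) (B : nat) :=
  (forall z, B%:Z <= z -> R z) /\ (forall z, z <= - B%:Z -> ~~ R z).
Definition Xc (R : int -> bool) (s : int) : nat := icard (fun z => (s < z) && ~~ R z).
Definition Yc (R : int -> bool) (s : int) : nat := icard (fun z => (z <= s) && R z).

Lemma Xc_bound R B : goodR R B -> forall s, forall z, (s < z) && ~~ R z -> (absz z <= B + absz s)%N.
Proof.
move=> [h1 h2] s z /andP[hs hR].
have : z < B%:Z by rewrite ltNge; apply/negP => /h1; apply/negP.
lia.
Qed.

Lemma Yc_bound R B : goodR R B -> forall s, forall z, (z <= s) && R z -> (absz z <= B + absz s)%N.
Proof.
move=> [h1 h2] s z /andP[hs hR].
have : - B%:Z < z by rewrite ltNge; apply/negP => /h2; rewrite hR.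
lia.
Qed.

Lemma Xrec R B s : goodR R B -> Xc R s = (Xc R (s + 1)%R + ~~ R (s + 1)%R)%N.
Proof.
move=> hg; rewrite /Xc !(@icardE _ (B + absz s + 1)); first last.
- move=> z /(@Xc_bound _ _ hg _); lia.
- move=> z /(@Xc_bound _ _ hg _); lia.
rewrite (@count_split _ (fun z => (s + 1 < z) && ~~ R z) (fun z => (z == s + 1) && ~~ R z)).
- by rewrite count_single ?zwindow_uniq ?zwindow_mem //; lia.
- by move=> z /=; case: (R z); lia.
- by move=> z /=; case: (R z); lia.
Qed.

Lemma Yrec R B s : goodR R B -> Yc R (s + 1) = (Yc R s + R (s + 1)%R)%N.
Proof.
move=> hg; rewrite /Yc !(@icardE _ (B + absz s + 1)); first last.
- move=> z /(@Yc_bound _ _ hg _); lia.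
- move=> z /(@Yc_bound _ _ hg _); lia.
rewrite (@count_split _ (fun z => (z <= s) && R z) (fun z => (z == s + 1) && R z)).
- by rewrite count_single ?zwindow_uniq ?zwindow_mem //; lia.
- by move=> z /=; case: (R z); lia.
- by move=> z /=; case: (R z); lia.
Qed.

Lemma int_const (f : int -> int) : (forall s, f (s + 1) = f s) -> forall s, f s = f 0.
Proof.
move=> h.
have hp : forall n : nat, f n%:Z = f 0.
  by elim=> // n IH; rewrite -IH -(h n%:Z); congr f; lia.
have hn : forall n : nat, f (- n%:Z) = f 0.
  elim=> [|n IH]; first by rewrite oppr0.
  by rewrite -IH -(h (- n.+1%:Z)); congr f; lia.
by case=> n; [apply: hp | rewrite NegzE hn].
Qed.

Lemma Dconst R B : goodR R B -> forall s,
  (Yc R s)%:Z - (Xc R s)%:Z - s = (Yc R 0)%:Z - (Xc R 0)%:Z.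
Proof.
move=> hg s; rewrite -[RHS]subr0.
apply: (@int_const (fun s => (Yc R s)%:Z - (Xc R s)%:Z - s)) => t.
rewrite (Yrec _ _ t hg) (Xrec _ _ t hg); case: (R (t + 1)); rewrite /= !PoszD; ring.
Qed.

Lemma Xmono R B : goodR R B -> forall s t, s <= t -> (Xc R t <= Xc R s)%N.
Proof.
move=> hg s t hst.
have -> : t = s + (absz (t - s))%:Z by lia.
elim: (absz (t - s)) => [|k IH]; first by rewrite addr0.
apply: leq_trans IH.
have -> : s + k.+1%:Z = (s + k%:Z) + 1 by lia.
by rewrite (Xrec _ _ (s + k%:Z) hg) leq_addr.
Qed.

Lemma Ymono R B : goodR R B -> forall s t, s <= t -> (Yc R s <= Yc R t)%N.
Proof.
move=> hg s t hst.
have -> : t = s + (absz (t - s))%:Z by lia.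
elim: (absz (t - s)) => [|k IH]; first by rewrite addr0.
apply: leq_trans IH _.
have -> : s + k.+1%:Z = (s + k%:Z) + 1 by lia.
by rewrite (Yrec _ _ (s + k%:Z) hg) leq_addr.
Qed.

Lemma telesc (r p q : nat -> bool) N :
  (forall k, p k -> p k.+1) -> (forall k, q k.+1 -> q k) ->
  (forall k, p k.+1 -> ~~ p k -> ~~ r k.+1) ->
  (forall k, q k -> ~~ q k.+1 -> r k.+1) ->
  ~~ (p 0%N && q 0%N) ->
  \sum_(0 <= k < N.+1) ((r k.+1)%:R - (r k)%:R) * (p k && q k)%:R =
   (if p N && q N then (r N.+1)%:R else (has (fun k => p k && q k) (iota 0 N.+1))%:R) :> int.
Proof.
move=> hp hq hpr hqr h0.
have pm : forall k l, (k <= l)%N -> p k -> p l.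
  move=> k l /subnK <-; elim: (l - k)%N => // d IH /IH; rewrite addSn; exact: hp.
have qm : forall k l, (k <= l)%N -> q l -> q k.
  move=> k l /subnK <-; elim: (l - k)%N => // d IH; rewrite addSn => /hq; exact: IH.
elim: N => [|N IH].
  by rewrite big_nat1 (negbTE h0) /= orbF (negbTE h0) mulr0.
rewrite big_nat_recr // IH.
have -> : iota 0 N.+2 = iota 0 N.+1 ++ [:: N.+1] by rewrite -addn1 iotaD.
rewrite has_cat has_seq1.
set H := has _ (iota 0 N.+1); rewrite /=.
case aN: (p N && q N); case aN1: (p N.+1 && q N.+1); rewrite /= ?mulr1 ?mulr0 ?addr0 ?orbF.
- by ring.
- 
  have -> : H = true by rewrite /H; apply/hasP; exists N; [rewrite mem_iota; lia | exact: aN].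
  move/andP: aN => [pN qN].
  have qN1 : ~~ q N.+1 by move: aN1; rewrite (hp _ pN) /= => ->.
  by rewrite (hqr _ qN qN1).
- have -> : H = false.
    rewrite /H; apply/hasP => [[k]]; rewrite mem_iota => /andP[_ hk] /andP[pk _].
    move/andP: aN1 => [_ qN1]; move: aN.
    by rewrite (pm k N) //= (hq _ qN1).
  move/andP: aN1 => [pN1 qN1].
  have pN : ~~ p N by move: aN; rewrite (hq _ qN1) andbT => ->.
  by rewrite (negbTE (hpr _ pN1 pN)) /=; ring.
- by [].
Qed.

Lemma Esum R B (hg : goodR R B) (i' j' : nat) N :
  (i' <= Xc R (- N%:Z))%N -> (j' <= Yc R N%:Z)%N ->
  \sum_(s <- zwindow N) ((R (s + 1))%:R - (R s)%:R) * ((Xc R s < i')%N && (Yc R s < j')%N)%:R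
   = (has (fun s => (Xc R s < i')%N && (Yc R s < j')%N) (zwindow N))%:R :> int.
Proof.
move=> hX hY.
have e : forall k : nat, ((k.+1)%:Z - N%:Z) = (k%:Z - N%:Z) + 1 by move=> k; lia.
rewrite sum_zwindow.
rewrite (eq_bigr (fun k => ((R ((k.+1)%:Z - N%:Z))%:R - (R (k%:Z - N%:Z))%:R) *
   ((Xc R (k%:Z - N%:Z) < i')%N && (Yc R (k%:Z - N%:Z) < j')%N)%:R)); last first.
  by move=> k _; rewrite e.
rewrite (@telesc (fun k => R (k%:Z - N%:Z)) (fun k => (Xc R (k%:Z - N%:Z) < i')%N)
   (fun k => (Yc R (k%:Z - N%:Z) < j')%N)).
- have -> : (Yc R ((N.*2)%:Z - N%:Z) < j')%N = false.
    by apply/negbTE; rewrite -leqNgt; have -> : (N.*2)%:Z - N%:Z = N%:Z by lia.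
  by rewrite andbF has_map.
- move=> k /= h; apply: leq_ltn_trans h; apply: (Xmono _ _ hg); lia.
- move=> k /= h; apply: leq_ltn_trans h; apply: (Ymono _ _ hg); lia.
- move=> k /=; rewrite e (Xrec _ _ (k%:Z - N%:Z) hg); case: (R _) => //=; rewrite addn0.
  by move=> ->.
- move=> k /=; rewrite e (Yrec _ _ (k%:Z - N%:Z) hg); case: (R _) => //=; rewrite addn0.
  by move=> ->.
- have -> : 0%:Z - N%:Z = - N%:Z by lia.
  by rewrite /= ltnNge hX.
Qed.

Lemma walkA R B (hg : goodR R B) (i j : nat) : forall d s, Xc R s = i -> (Yc R s + d = j)%N ->
  (exists t, Xc R t = i /\ Yc R t = j) \/ (exists t, (Xc R t < i)%N /\ (Yc R t < j)%N).
Proof.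
elim=> [|d IH] s hx hy; first by left; exists s; split => //; rewrite -hy addn0.
have hX := Xrec _ _ s hg; have hY := Yrec _ _ s hg.
case hR: (R (s + 1)) hX hY => /= hX hY.
- move: hX hY; set t := s + 1 => hX hY; apply: (IH t); lia.
- move: hX hY; set t := s + 1 => hX hY; right; exists t; lia.
Qed.

Lemma walkB R B (hg : goodR R B) (i j : nat) : forall d s, Yc R s = j -> (Xc R s + d = i)%N ->
  (exists t, Xc R t = i /\ Yc R t = j) \/ (exists t, (Xc R t < i)%N /\ (Yc R t < j)%N).
Proof.
elim=> [|d IH] s hy hx; first by left; exists s; split => //; rewrite -hx addn0.
have hX := Xrec _ _ (s - 1) hg; have hY := Yrec _ _ (s - 1) hg.
rewrite subrK in hX hY.
case hR: (R s) hX hY => /= hX hY.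
- move: hX hY; set t := s - 1 => hX hY; right; exists t; lia.
- move: hX hY; set t := s - 1 => hX hY; apply: (IH t); lia.
Qed.

Lemma nocross R B (hg : goodR R B) (i j : nat) s t :
  Xc R s = i -> Yc R s = j -> (Xc R t < i)%N -> (Yc R t < j)%N -> False.
Proof.
move=> hx hy ht1 ht2; case: (lerP s t) => hst.
- by have := Ymono _ _ hg _ _ hst; lia.
- by have := Xmono _ _ hg _ _ (ltW hst); lia.
Qed.

Lemma comb R B (hg : goodR R B) (i j : nat) N :
  (i.+1 <= Xc R (- N%:Z))%N -> (j.+1 <= Yc R N%:Z)%N ->
  (has (fun s => (Xc R s < i.+1)%N && (Yc R s < j.+1)%N) (zwindow N))%:R
  - (has (fun s => (Xc R s < i)%N && (Yc R s < j)%N) (zwindow N))%:R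
  = ((Xc R (j%:Z - i%:Z - ((Yc R 0)%:Z - (Xc R 0)%:Z)) == i)
     && (Yc R (j%:Z - i%:Z - ((Yc R 0)%:Z - (Xc R 0)%:Z)) == j))%:R :> int.
Proof.
move=> hX hY.
set s0 := j%:Z - i%:Z - _.
have inwin : forall s, (Xc R s <= i)%N -> (Yc R s <= j)%N -> s \in zwindow N.
  move=> s h1 h2; rewrite zwindow_mem.
  have a1 : - N%:Z < s.
    rewrite ltNge; apply/negP => /(Xmono _ _ hg) h; lia.
  have a2 : s < N%:Z.
    rewrite ltNge; apply/negP => /(Ymono _ _ hg) h; lia.
  lia.
have uniq0 : forall t, Xc R t = i -> Yc R t = j -> t = s0.
  move=> t h1 h2; have := Dconst _ _ hg t; rewrite /s0 h1 h2; lia.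
case hC: ((Xc R s0 == i) && (Yc R s0 == j)).
- move/andP: hC => [/eqP h1 /eqP h2].
  have -> : has (fun s => (Xc R s < i.+1)%N && (Yc R s < j.+1)%N) (zwindow N).
    apply/hasP; exists s0; first by apply: inwin; lia.
    by rewrite h1 h2 !ltnSn.
  have -> : has (fun s => (Xc R s < i)%N && (Yc R s < j)%N) (zwindow N) = false.
    apply/hasP => [[t _ /andP[t1 t2]]]; exact: (@nocross _ _ hg _ _ _ _ h1 h2 t1 t2).
  by rewrite subr0.
- have noC : forall t, Xc R t = i -> Yc R t = j -> False.
    move=> t h1 h2; have e := uniq0 t h1 h2; move: hC; rewrite -e h1 h2 !eqxx.
    by [].
  case hP: (has (fun s => (Xc R s < i.+1)%N && (Yc R s < j.+1)%N) (zwindow N)).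
  + move/hasP: hP => [s _ /andP[p1 p2]].
    have : (exists t, (Xc R t < i)%N /\ (Yc R t < j)%N).
      case: (ltnP (Xc R s) i) => x1.
        case: (ltnP (Yc R s) j) => y1; first by exists s.
        have ey : Yc R s = j by lia.
        have [[t [? ?]]|//] := @walkB _ _ hg _ _ (i - Xc R s) s ey (subnKC (ltnW x1)).
        by case: (noC t).
      have ex : Xc R s = i by lia.
      have [[t [? ?]]|//] := @walkA _ _ hg _ _ (j - Yc R s) s ex (subnKC (p2 : (Yc R s <= j)%N)).
      by case: (noC t).
    move=> [t [t1 t2]].
    have -> : has (fun s => (Xc R s < i)%N && (Yc R s < j)%N) (zwindow N).
      apply/hasP; exists t; first by apply: inwin; lia.
      by rewrite t1 t2.
    by rewrite subrr.
  + have -> : has (fun s => (Xc R s < i)%N && (Yc R s < j)%N) (zwindow N) = false.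
      apply/hasP => [[t tw /andP[t1 t2]]]; move/hasP: hP; apply; exists t => //.
      by rewrite ltnS (ltnW t1) ltnS (ltnW t2).
    by rewrite subr0.
Qed.

Lemma bmul (b c : bool) : (b && c)%:R = b%:R * c%:R :> int.
Proof. by case: b; case: c; rewrite /= ?mulr1 ?mulr0. Qed.

Lemma sum_eqind (n k : nat) : \sum_(a < n) ((a : nat) == k)%:R = (k < n)%:R :> int.
Proof.
elim: n => [|n IH]; first by rewrite big_ord0.
by rewrite big_ord_recr /= IH -natrD; congr (_%:R); lia.
Qed.

Lemma sum_rev (x i : nat) : \sum_(a < i.+1) (x == (i - a)%N)%:R = (x < i.+1)%:R :> int.
Proof.
elim: i => [|i IH]; first by rewrite big_ord1 /= subn0 ltnS leqn0.
rewrite big_ord_recl /= subn0.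
rewrite (eq_bigr (fun a : 'I_i.+1 => (x == (i - a)%N)%:R)); last by move=> a _; rewrite /bump /= add1n subSS.
by rewrite IH -natrD; congr (_%:R); lia.
Qed.

Lemma sum_rev1 (x i : nat) : \sum_(a < i.+1) ((0 < a)%N)%:R * (x == (i - a)%N)%:R = (x < i)%:R :> int.
Proof.
rewrite big_ord_recl /= mul0r add0r.
rewrite (eq_bigr (fun a : 'I_i => (x == (i.-1 - a)%N)%:R)); last first.
  by move=> a _; rewrite /bump /= add1n mul1r; case: i a => [[]//|i] a; rewrite subSS.
case: i => [|i]; first by rewrite big_ord0.
by rewrite sum_rev.
Qed.

Lemma AI a b : smul one_minus_xy inv_1mx_1my a b = 1 - ((0 < a)%N && (0 < b)%N)%:R.
Proof.
rewrite /smul /one_minus_xy /inv_1mx_1my.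
have h : forall (a' : 'I_a.+1) (b' : 'I_b.+1),
   (((a' == 0%N :> nat) && (b' == 0%N :> nat))%:R - ((a' == 1%N :> nat) && (b' == 1%N :> nat))%:R) * 1
   = ((a' : nat) == 0%N)%:R * ((b' : nat) == 0%N)%:R - ((a' : nat) == 1%N)%:R * ((b' : nat) == 1%N)%:R :> int.
  by move=> a' b'; rewrite mulr1 !bmul.
rewrite (eq_bigr (fun a' : 'I_a.+1 => \sum_(b' < b.+1) (((a' : nat) == 0%N)%:R * ((b' : nat) == 0%N)%:R - ((a' : nat) == 1%N)%:R * ((b' : nat) == 1%N)%:R))); last first.
  by move=> a' _; apply: eq_bigr => b' _; rewrite h.
rewrite (eq_bigr (fun a' : 'I_a.+1 => \sum_(b' < b.+1) (((a' : nat) == 0%N)%:R * ((b' : nat) == 0%N)%:R) - \sum_(b' < b.+1) (((a' : nat) == 1%N)%:R * ((b' : nat) == 1%N)%:R))); last first.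
  by move=> a' _; rewrite sumrB.
clear h; rewrite sumrB -!big_distrlr /= !sum_eqind -!natrM -natrB; last by case: a; case: b.
lia.
Qed.

Lemma hook_ind (x y i j : nat) :
  \sum_(a < i.+1) \sum_(b < j.+1) ((1 - ((0 < a)%N && (0 < b)%N)%:R) *
      ((x == (i - a)%N) && (y == (j - b)%N))%:R)
  = ((x < i.+1)%N && (y < j.+1)%N)%:R - ((x < i)%N && (y < j)%N)%:R :> int.
Proof.
rewrite (eq_bigr (fun a : 'I_i.+1 => \sum_(b < j.+1) ((x == (i - a)%N)%:R * (y == (j - b)%N)%:R) -
   \sum_(b < j.+1) (((0 < a)%N)%:R * (x == (i - a)%N)%:R) * (((0 < b)%N)%:R * (y == (j - b)%N)%:R))); last first.
  move=> a _; rewrite -sumrB; apply: eq_bigr => b _; rewrite !bmul; ring.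
rewrite sumrB -!big_distrlr /= sum_rev sum_rev1 sum_rev sum_rev1 !bmul.
by [].
Qed.

Lemma rhs_hook (G : series) (g : int -> int) (X Y : int -> nat) (w : seq int) :
  (forall a b, G a b = \sum_(s <- w) g s * ((X s == a) && (Y s == b))%:R) ->
  forall i j, smul (smul one_minus_xy inv_1mx_1my) G i j =
   \sum_(s <- w) g s * ((X s < i.+1)%N && (Y s < j.+1)%N)%:R
   - \sum_(s <- w) g s * ((X s < i)%N && (Y s < j)%N)%:R.
Proof.
move=> hG i j.
rewrite -sumrB {1}/smul.
rewrite (eq_bigr (fun a : 'I_i.+1 => \sum_(b < j.+1) \sum_(s <- w)
    g s * ((1 - ((0 < a)%N && (0 < b)%N)%:R) * ((X s == (i - a)%N) && (Y s == (j - b)%N))%:R))); last first.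
  move=> a _; apply: eq_bigr => b _; rewrite AI hG mulr_sumr; apply: eq_bigr => s _; ring.
rewrite (eq_bigr (fun a : 'I_i.+1 => \sum_(s <- w) \sum_(b < j.+1)
    g s * ((1 - ((0 < a)%N && (0 < b)%N)%:R) * ((X s == (i - a)%N) && (Y s == (j - b)%N))%:R))); last first.
  by move=> a _; rewrite exchange_big.
rewrite exchange_big /=; apply: eq_bigr => s _.
by rewrite -mulrBr -hook_ind mulr_sumr; apply: eq_bigr => a _; rewrite mulr_sumr.
Qed.

Lemma rvec_upd m n (u : config m n) s k : rvec (upd u s) k = rvec u k.
Proof.
rewrite /rvec /upd /=; congr (_ - (_)%:Z).
apply: eq_card => j; rewrite !inE /=.
by case h: (val j < m.-1)%N => //=; rewrite (ltn_eqF h).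
Qed.

Lemma right_pt_upd m n (u : config m n) s : right_pt (upd u s) = right_pt u.
Proof.
apply: functional_extensionality => z; rewrite /right_pt /rvec_nat.
by case: insubP => [o _ _|_] //=; rewrite rvec_upd.
Qed.

Lemma sinkval_upd m n (u : config m n) s : (0 < m)%N -> sinkval (upd u s) = s.
Proof.
move=> hm; rewrite /sinkval; case: insubP => [o _ eo|] /=.
  by rewrite /upd /= eo eqxx.
by rewrite prednK ?leqnn.
Qed.

Lemma xpara_upd m n (u : config m n) s : (0 < m)%N -> xpara (upd u s) = Xc (right_pt u) s.
Proof. by move=> hm; rewrite /xpara /left_pt sinkval_upd // right_pt_upd. Qed.

Lemma ypara_upd m n (u : config m n) s : (0 < m)%N -> ypara (upd u s) = Yc (right_pt u) s.
Proof. by move=> hm; rewrite /ypara sinkval_upd // right_pt_upd. Qed.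

Lemma R_good m n (u : config m n) : (0 < n)%N -> exists B, goodR (right_pt u) B.
Proof.
move=> hn.
pose M := (\sum_(o < n) absz (rvec u o))%N.
have hM : forall k, (absz (rvec_nat u k) <= M)%N.
  move=> k; rewrite /rvec_nat; case: insubP => [o _ _|_] //=.
  by rewrite /M (bigD1 o) //= leq_addr.
have hn' : 0 < n%:Z by rewrite ltz_nat.
exists (n * M.+1)%N; split => z hz; rewrite /right_pt.
- have := hM (absz (z %% n%:Z)%Z).
  have : (M.+1)%:Z <= (z %/ n%:Z)%Z by rewrite lez_divRL //; move: hz; rewrite PoszM; lia.
  lia.
- have := hM (absz (z %% n%:Z)%Z).
  have h1 := lez_floor z (d := n%:Z) (lt0r_neq0 hn').
  have h2 : (z %/ n%:Z)%Z * n%:Z <= (- (M.+1)%:Z) * n%:Z by move: hz; rewrite PoszM; lia.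
  rewrite ler_pM2r // in h2.
  rewrite -ltNge; lia.
Qed.

Theorem lemma15p1 (m n : nat) (hm : (0 < m)%N) (hn : (0 < n)%N)
    (u : config m n) (hpark : parking u) (hsort : sorted_config u) :
  (* well-definedness of xpara, ypara and of the series F_u *)
  (forall s : int,
      ifinite (fun sigma => (sinkval (upd u s) < sigma) && left_pt (upd u s) sigma) /\
      ifinite (fun sigma => (sigma <= sinkval (upd u s)) && right_pt (upd u s) sigma)) /\
  (forall i j : nat, ifinite (mono_coef u predT i j)) /\
  (* S_u^+ and S_u^- are finite with |S_u^+| = |S_u^-| + 1 *)
  ifinite (Splus u) /\ ifinite (Sminus u) /\
  icard (Splus u) = (icard (Sminus u)).+1 /\
  (* F_u = (1 - xy)/((1-x)(1-y)) * (sum_{S+} - sum_{S-}) *)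
  Fu u = smul (smul one_minus_xy inv_1mx_1my) (Gu u).
Proof.
have [B hg] := R_good _ _ u hn.
have hx : forall s, xpara (upd u s) = Xc (right_pt u) s := fun s => xpara_upd _ _ u s hm.
have hy : forall s, ypara (upd u s) = Yc (right_pt u) s := fun s => ypara_upd _ _ u s hm.
have hS : forall z, Splus u z || Sminus u z -> (absz z <= B)%N.
  move: hg => [g1 g2] z; rewrite /Splus /Sminus /left_pt.
  case h0: (right_pt u z); case h1: (right_pt u (z + 1)) => //= _.
  - have : z + 1 < B%:Z by rewrite ltNge; apply/negP => /g1; rewrite h1.
    have : - B%:Z < z by rewrite ltNge; apply/negP => /g2; rewrite h0.
    lia.
  - have : z < B%:Z by rewrite ltNge; apply/negP => /g1; rewrite h0.
    have : - B%:Z < z + 1 by rewrite ltNge; apply/negP => /g2; rewrite h1.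
    lia.
set R := right_pt u in hx hy hg hS *.
set c := (Yc R 0)%:Z - (Xc R 0)%:Z.
split.
  move=> s; rewrite sinkval_upd // /left_pt right_pt_upd; split.
    by exists (B + absz s)%N; apply: (Xc_bound _ _ hg).
  by exists (B + absz s)%N; apply: (Yc_bound _ _ hg).
have uniq0 : forall i j z, mono_coef u predT i j z -> z = j%:Z - i%:Z - c.
  move=> i j z; rewrite /mono_coef hx hy /= => /andP[/eqP h1 /eqP h2].
  by have := Dconst _ _ hg z; rewrite /c h1 h2; lia.
split.
  by move=> i j; exists (absz (j%:Z - i%:Z - c)%R) => z /uniq0 ->.
split; first by exists B => z hz; apply: hS; rewrite hz.
split; first by exists B => z hz; apply: hS; rewrite hz orbT.
have hw : forall N, (B <= N)%N -> forall P : pred int,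
    (forall z, P z -> Splus u z || Sminus u z) -> icard P = count P (zwindow N).
  move=> N hN P hP; apply: icardE => z /hP /hS; lia.
have gS : forall s, (Splus u s)%:R - (Sminus u s)%:R = (R (s + 1))%:R - (R s)%:R :> int.
  by move=> s; rewrite /Splus /Sminus /left_pt -/R; case: (R s); case: (R (s + 1)).
split.
  rewrite !(hw B (leqnn B)); try by move=> z ->; rewrite ?orbT.
  suff : (count (Splus u) (zwindow B))%:R - (count (Sminus u) (zwindow B))%:R = 1 :> int by lia.
  rewrite !count_sum -sumrB (eq_bigr _ (fun s _ => gS s)) sum_zwindow.
  rewrite (@telescope_sumr_eq _ _ _ (fun k : nat => (R (k%:Z - B%:Z))%:R)) //.
    have -> : R ((B.*2).+1%:Z - B%:Z) by apply: hg.1; lia.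
    have -> : R (0%:Z - B%:Z) = false by apply/negbTE; apply: hg.2; lia.
    by [].
  by move=> k _; have -> : (k.+1)%:Z - B%:Z = (k%:Z - B%:Z) + 1 by lia.
apply: functional_extensionality => i; apply: functional_extensionality => j.
set N := (B + i + j + absz c).+1.
have hG : forall a b, Gu u a b = \sum_(s <- zwindow N) ((R (s + 1))%:R - (R s)%:R) *
    ((Xc R s == a) && (Yc R s == b))%:R.
  move=> a b; rewrite /Gu !(hw N); try (by move=> z /andP[/andP[-> _] _]; rewrite ?orbT); try (rewrite /N; lia).
  rewrite -!natz !count_sum -sumrB; apply: eq_bigr => s _.
  rewrite /mono_coef hx hy -gS.
  by case: (Splus u s); case: (Sminus u s); case: (Xc R s == a); case: (Yc R s == b);
    rewrite /= ?mulr1 ?mulr0.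
rewrite (rhs_hook _ _ _ _ _ hG).
have dN := Dconst _ _ hg N%:Z; have dmN := Dconst _ _ hg (- N%:Z).
rewrite -/c in dN dmN.
have hX : (i.+1 <= Xc R (- N%:Z))%N by rewrite /N in dmN *; lia.
have hY : (j.+1 <= Yc R N%:Z)%N by rewrite /N in dN *; lia.
rewrite (@Esum _ _ hg _ _ _ hX hY) (@Esum _ _ hg _ _ _ (ltnW hX) (ltnW hY)) (@comb _ _ hg _ _ _ hX hY).
rewrite /Fu (@icard_single _ (j%:Z - i%:Z - c)); last by move=> z /uniq0.
by rewrite /mono_coef hx hy /=; case: (_ && _).
Qed.
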